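(* Let $T$ be a linear transformation of a finite-dimensional real vector space $W$, and assume $W$ splits as a direct sum of (real) eigenspaces of $T$ with eigenvalues $\neq\pm1$. Let $W^+,W^-\subseteq W$ be subspaces with $\dim W^++\dim W^-=\dim W$ such that $W^+$ has zero intersection with the contracting subspace of $W$ and $W^-$ has zero intersection with the expanding subspace of $W$ determined by $T$. Then there is $K$ such that whenever $k^+,k^-$ are nonnegative integers with $k^++k^-\geq K$, $$W=T^{k^+}W^+\oplus T^{-k^-}W^-,$$ and moreover this decomposition is uniformly transverse in $k^\pm$: for a fixed inner product on $W$ there is $\epsilon>0$ such that for all such $k^\pm$, any unit vector in $T^{k^+}W^+$ and any unit vector in $T^{-k^-}W^-$ make an angle at least $\epsilon$.
   Context: The contracting (resp. expanding) subspace of $W$ determined by $T$ is the sum of the eigenspaces of $T$ whose eigenvalues have absolute value $<1$ (resp. $>1$). *)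

(* Defs.v *)
(* W = 'rV[R]_n, R : realType; linear maps act on row vectors
   by v |-> v *m T; subspaces are represented by matrices (row spaces, %MS). *)
From HB Require Import structures.
From mathcomp Require Import all_boot all_order all_algebra.
From mathcomp Require Import reals trigo.
Set Implicit Arguments. Unset Strict Implicit. Unset Printing Implicit Defensive.
Import Order.TTheory GRing.Theory Num.Theory.
Local Open Scope ring_scope.

Definition in_eigen_sum {R : fieldType} {n : nat} (P : R -> bool)
  (T : 'M[R]_n) (v : 'rV[R]_n) : Prop :=
  exists s : seq R, all P s /\ (v <= \sum_(a <- s) eigenspace T a)%MS.

Definition in_contracting {R : realType} {n : nat} (T : 'M[R]_n) (v : 'rV[R]_n) : Prop :=
  in_eigen_sum (fun a : R => `|a| < 1) T v.

Definition in_expanding {R : realType} {n : nat} (T : 'M[R]_n) (v : 'rV[R]_n) : Prop :=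
  in_eigen_sum (fun a : R => 1 < `|a|) T v.

Definition ip {R : pzRingType} {n : nat} (M : 'M[R]_n) (u w : 'rV[R]_n) : R :=
  (u *m M *m w^T) 0 0.

Definition inner_product_mx {R : realType} {n : nat} (M : 'M[R]_n) : Prop :=
  M^T = M /\ forall v : 'rV[R]_n, v != 0 -> 0 < ip M v v.

(* unoriented angle between vectors u, w (for unit vectors w.r.t. M) *)
Definition angle {R : realType} {n : nat} (M : 'M[R]_n) (u w : 'rV[R]_n) : R :=
  acos (ip M u w).

(* Main.v *)
Require Import Defs.
From HB Require Import structures.
From mathcomp Require Import all_boot all_order all_algebra.
From mathcomp Require Import reals trigo.
From mathcomp Require Import ring lra zify.
Set Implicit Arguments. Unset Strict Implicit. Unset Printing Implicit Defensive.
Import Order.TTheory GRing.Theory Num.Theory.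
Local Open Scope ring_scope.


Section IP.
Variables (R : realType) (n : nat).
Implicit Types (M X : 'M[R]_n) (u v w : 'rV[R]_n).

Lemma ipDl M u v w : ip M (u + v) w = ip M u w + ip M v w.
Proof. by rewrite /ip !mulmxDl mxE. Qed.
Lemma ipDr M u v w : ip M u (v + w) = ip M u v + ip M u w.
Proof. by rewrite /ip linearD /= mulmxDr mxE. Qed.
Lemma ipZl M a u w : ip M (a *: u) w = a * ip M u w.
Proof. by rewrite /ip -!scalemxAl mxE. Qed.
Lemma ipZr M a u w : ip M u (a *: w) = a * ip M u w.
Proof. by rewrite /ip linearZ /= -scalemxAr mxE. Qed.
Lemma ipNl M u w : ip M (- u) w = - ip M u w.
Proof. by rewrite -scaleN1r ipZl mulN1r. Qed.
Lemma ipNr M u w : ip M u (- w) = - ip M u w.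
Proof. by rewrite -scaleN1r ipZr mulN1r. Qed.
Lemma ip0l M w : ip M 0 w = 0.
Proof. by rewrite /ip !mul0mx mxE. Qed.
Lemma ip0r M w : ip M w 0 = 0.
Proof. by rewrite /ip trmx0 mulmx0 mxE. Qed.
Lemma ip_sym M u w : M^T = M -> ip M u w = ip M w u.
Proof.
move=> hM; rewrite /ip.
have e : forall A : 'M[R]_1, A 0 0 = A^T 0 0 by move=> A; rewrite mxE.
by rewrite e !trmx_mul trmxK hM mulmxA.
Qed.

Lemma ipQ_ge0 M v : inner_product_mx M -> 0 <= ip M v v.
Proof.
case=> _ hp; have [->|nz] := eqVneq v 0; first by rewrite ip0l.
exact/ltW/hp.
Qed.

Lemma ip_cs M u w : inner_product_mx M ->
  ip M u w ^+ 2 <= ip M u u * ip M w w.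
Proof.
move=> hM; have [->|nz] := eqVneq u 0; first by rewrite !ip0l expr0n /= mul0r.
have qp : 0 < ip M u u by case: hM => _ /(_ u nz).
set q := ip M u u; set i := ip M u w; set t := i / q.
have h := ipQ_ge0 (w - t *: u) hM.
rewrite !(ipDl, ipDr, ipNl, ipNr, ipZl, ipZr) in h.
rewrite (ip_sym w u (proj1 hM)) -/i -/q in h.
have h2 : 0 <= q * (ip M w w - t * i - t * i + t * (t * q)).
  by apply: mulr_ge0; [exact: ltW|lra].
have e : q * (ip M w w - t * i - t * i + t * (t * q)) = q * ip M w w - i ^+ 2.
  rewrite /t; field; exact: lt0r_neq0 qp.
by rewrite e subr_ge0 in h2.
Qed.

Definition nrm2 v := ip 1%:M v v.

Lemma nrm2E v : nrm2 v = \sum_j v 0 j ^+ 2.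
Proof. by rewrite /nrm2 /ip mulmx1 mxE; apply: eq_bigr => j _; rewrite mxE expr2. Qed.

Lemma nrm2_ge0 v : 0 <= nrm2 v.
Proof. by rewrite nrm2E; apply: sumr_ge0 => j _; exact: sqr_ge0. Qed.

Lemma nrm2_eq0 v : nrm2 v = 0 -> v = 0.
Proof.
rewrite nrm2E => /eqP; rewrite psumr_eq0 => [/allP h|j _]; last exact: sqr_ge0.
apply/matrixP => i j; rewrite ord1 mxE; apply/eqP.
by rewrite -sqrf_eq0; apply: (implyP (h j (mem_index_enum j))).
Qed.

Lemma ipm_one : inner_product_mx (1%:M : 'M[R]_n).
Proof.
split; first by rewrite tr_scalar_mx.
move=> v nz; rewrite lt_def nrm2_ge0 andbT.
by apply: contra nz => /eqP /nrm2_eq0 ->.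
Qed.

Lemma ipm_unit M : inner_product_mx M -> M \in unitmx.
Proof.
move=> [_ hp]; rewrite -row_free_unit; apply/negPn/negP => nf.
have : kermx M != 0.
  rewrite -mxrank_eq0 mxrank_ker; move: nf; rewrite /row_free => /eqP.
  have := rank_leq_row M; lia.
case/rowV0Pn => v /sub_kermxP vM nz.
have := hp v nz; by rewrite /ip vM mul0mx mxE ltxx.
Qed.

Lemma bound_mul M X : inner_product_mx M ->
  exists2 c, 0 <= c & forall v, nrm2 (v *m X) <= c * ip M v v.
Proof.
move=> hM; have Mu := ipm_unit hM.
pose f (j : 'I_n) := (invmx M *m col j X)^T.
have hf v j : ip M v (f j) = (v *m X) 0 j.
  rewrite /ip /f trmxK mulmxA -(mulmxA v) mulmxV // mulmx1.
  by rewrite !mxE; apply: eq_bigr => k _; rewrite !mxE.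
exists (\sum_j ip M (f j) (f j)); first by apply: sumr_ge0 => j _; exact: ipQ_ge0.
move=> v; rewrite nrm2E mulr_suml; apply: ler_sum => j _; rewrite mulrC.
by rewrite -hf ip_cs.
Qed.

End IP.


Lemma mem_cons_tl (T : eqType) (b x : T) (s : seq T) : x \in s -> x \in b :: s.
Proof. by rewrite inE => ->; rewrite orbT. Qed.

Section Decay.
Variables (R : realType) (n : nat).
Implicit Types (M X : 'M[R]_n) (u v w : 'rV[R]_n).

Lemma nrm2_scale a v : nrm2 (a *: v) = a ^+ 2 * nrm2 v.
Proof. by rewrite /nrm2 ipZl ipZr mulrA expr2. Qed.

Lemma nrm2_0 : nrm2 (0 : 'rV[R]_n) = 0.
Proof. by rewrite /nrm2 ip0l. Qed.

Lemma nrm2_par u v : nrm2 (u + v) + nrm2 (u - v) = 2 * nrm2 u + 2 * nrm2 v.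
Proof.
rewrite /nrm2 !(ipDl, ipDr, ipNl, ipNr).
rewrite (ip_sym v u (tr_scalar_mx _ _)); ring.
Qed.

Lemma nrm2_add u v : nrm2 (u + v) <= 2 * nrm2 u + 2 * nrm2 v.
Proof. have := nrm2_par u v; have := nrm2_ge0 (u - v); lra. Qed.

Lemma nrm2_lam u v (l : R) : 0 < l ->
  (1 - l) * nrm2 u + (1 - l^-1) * nrm2 v <= nrm2 (u - v).
Proof.
move=> lp; have h := nrm2_ge0 (l *: u - v).
rewrite /nrm2 !(ipDl, ipDr, ipNl, ipNr, ipZl, ipZr) in h *.
rewrite (ip_sym v u (tr_scalar_mx _ _)) in h *.
set a := ip 1%:M u u in h *; set b := ip 1%:M v v in h *; set c := ip 1%:M u v in h *.
have h2 : 0 <= l^-1 * (l * (l * a) - l * c - (l * c) + b).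
  apply: mulr_ge0; first by rewrite invr_ge0 ltW.
  have -> : l * (l * a) - l * c - l * c + b = l * (l * a - c) - (l * c - b) by ring.
  exact: h.
have e : l^-1 * (l * (l * a) - l * c - (l * c) + b) = l * a - 2 * c + l^-1 * b.
  by field; exact: lt0r_neq0 lp.
rewrite e in h2; lra.
Qed.

Variable S : 'M[R]_n.
Variable V : R -> 'M[R]_n.
Hypothesis hV : forall b v, (v <= V b)%MS -> v *m S = b *: v.

Lemma sumV_cons b s : (\sum_(a <- b :: s) V a)%MS = (V b + \sum_(a <- s) V a)%MS.
Proof. by rewrite big_cons. Qed.

Lemma sumV_nil : (\sum_(a <- [::]) V a)%MS = 0.
Proof. by rewrite big_nil. Qed.

Lemma sumV_S s v : (v <= \sum_(a <- s) V a)%MS -> (v *m S <= \sum_(a <- s) V a)%MS.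
Proof.
elim: s v => [|b s IH] v; first by rewrite sumV_nil submx0 => /eqP ->; rewrite mul0mx sub0mx.
rewrite sumV_cons => /sub_addsmxP [[x y] /= ->].
rewrite mulmxDl addmx_sub_adds //; last by apply: IH; exact: submxMl.
by rewrite (hV (submxMl _ _)) scalemx_sub // submxMl.
Qed.

Lemma sumV_Sc s c v : (v <= \sum_(a <- s) V a)%MS ->
  (v *m (S - c%:M) <= \sum_(a <- s) V a)%MS.
Proof.
move=> hv; rewrite mulmxBr mul_mx_scalar addmx_sub ?eqmx_opp ?scalemx_sub //.
exact: sumV_S.
Qed.

Definition killer (s : seq R) := foldr (fun c X => (S - c%:M) *m X) 1%:M s.

Lemma killer_kill s v : (v <= \sum_(a <- s) V a)%MS -> v *m killer s = 0.
Proof.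
elim: s v => [|b s IH] v; first by rewrite sumV_nil submx0 => /eqP ->; rewrite mul0mx.
rewrite sumV_cons => /sub_addsmxP [[x y] /= ->] /=.
set x0 := x *m V b; set y0 := y *m _.
have hx0 : (x0 <= V b)%MS by exact: submxMl.
have hy0 : (y0 <= \sum_(a <- s) V a)%MS by exact: submxMl.
rewrite mulmxDl !mulmxA (IH (y0 *m (S - b%:M))); last exact: sumV_Sc.
by rewrite mulmxBr mul_mx_scalar (hV hx0) subrr mul0mx add0r.
Qed.

Lemma killer_eig s b v : (v <= V b)%MS ->
  v *m killer s = (\prod_(c <- s) (b - c)) *: v.
Proof.
move=> hv; elim: s => [|c s IH] /=; first by rewrite big_nil scale1r mulmx1.
rewrite mulmxA mulmxBr mul_mx_scalar (hV hv) -scalerBl -scalemxAl IH.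
by rewrite big_cons scalerA.
Qed.

Lemma eig_pow b v k : (v <= V b)%MS -> v *m S ^+ k = b ^+ k *: v.
Proof.
move=> hv; elim: k => [|k IH]; first by rewrite !expr0 scale1r mulmx1.
by rewrite exprSr -mulmxE mulmxA IH -scalemxAl (hV hv) scalerA exprSr.
Qed.

Lemma decay s r : uniq s -> 0 <= r -> (forall b, b \in s -> b ^+ 2 <= r) ->
  exists2 c, 0 <= c & forall v, (v <= \sum_(a <- s) V a)%MS ->
    forall k, nrm2 (v *m S ^+ k) <= c * r ^+ k * nrm2 v.
Proof.
move=> + r0; elim: s => [|b s IH].
  move=> _ _; exists 0 => // v; rewrite sumV_nil submx0 => /eqP -> k.
  by rewrite mul0mx nrm2_0 !mul0r.
rewrite cons_uniq => /andP [bs us] hb.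
have [c' c'0 hc'] := IH us (fun x xs => hb x (mem_cons_tl b xs)).
have [cX cX0 hX] := bound_mul (killer s) (ipm_one R n).
set P := \prod_(c <- s) (b - c).
have P0 : P != 0.
  rewrite /P prodf_seq_neq0; apply/allP => c cs /=; rewrite subr_eq0.
  by apply: contraNneq bs => ->.
pose D := P^-1 ^+ 2 * cX.
have D0 : 0 <= D by rewrite /D mulr_ge0 // sqr_ge0.
exists ((2 + 4 * c') * D + 4 * c'); first by nra.
move=> v; rewrite sumV_cons => /sub_addsmxP [[x y] /= ev] k.
set x0 := x *m V b in ev; set y0 := y *m _ in ev.
have hx0 : (x0 <= V b)%MS by exact: submxMl.
have hy0 : (y0 <= \sum_(a <- s) V a)%MS by exact: submxMl.
have ex0 : x0 = P^-1 *: (v *m killer s).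
  by rewrite ev mulmxDl (killer_kill hy0) addr0 (killer_eig _ hx0) scalerA mulVf // scale1r.
have hNx : nrm2 x0 <= D * nrm2 v.
  rewrite ex0 nrm2_scale /D -mulrA ler_wpM2l ?sqr_ge0 //.
have hNy : nrm2 y0 <= 2 * nrm2 v + 2 * nrm2 x0.
  have -> : y0 = v + (- x0) by rewrite ev addrC addKr.
  by have := nrm2_add v (- x0); rewrite /nrm2 ipNl ipNr opprK.
have h1 : nrm2 (x0 *m S ^+ k) <= r ^+ k * nrm2 x0.
  rewrite (eig_pow k hx0) nrm2_scale -exprM mulnC exprM ler_wpM2r ?nrm2_ge0 //.
  by rewrite lerXn2r ?nnegrE ?sqr_ge0 ?hb ?mem_head.
have h2 := hc' _ hy0 k.
have h3 : nrm2 (v *m S ^+ k) <= 2 * nrm2 (x0 *m S ^+ k) + 2 * nrm2 (y0 *m S ^+ k).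
  by rewrite {1}ev mulmxDl nrm2_add.
have rk0 : 0 <= r ^+ k by exact: exprn_ge0.
have Nv0 := nrm2_ge0 v; have Nx0 := nrm2_ge0 x0; have Ny0 := nrm2_ge0 y0.
have h4 : c' * r ^+ k * nrm2 y0 <= c' * r ^+ k * (2 * nrm2 v + 2 * nrm2 x0).
  by rewrite ler_wpM2l // mulr_ge0.
have h5 : 0 <= r ^+ k * ((2 + 4 * c') * (D * nrm2 v - nrm2 x0)).
  by rewrite mulr_ge0 // mulr_ge0 ?subr_ge0 //; lra.
nra.
Qed.

End Decay.

Lemma exists_r (R : realType) (s : seq R) : (forall b, b \in s -> b ^+ 2 < 1) ->
  exists r, [/\ 0 <= r, r < 1 & forall b, b \in s -> b ^+ 2 <= r].
Proof.
elim: s => [|b s IH] hs; first by exists 0; split => //; lra.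
have [r [r0 r1 hr]] := IH (fun x xs => hs x (mem_cons_tl b xs)).
exists (Num.max (b ^+ 2) r); split.
- by rewrite le_max r0 orbT.
- by rewrite gt_max r1 hs ?mem_head.
- move=> x; rewrite inE => /orP [/eqP ->|xs]; first by rewrite le_max lexx.
  by rewrite le_max hr ?orbT.
Qed.


Lemma bernoulli_ge (R : realType) (t : R) k : 0 <= t -> 1 + k%:R * t <= (1 + t) ^+ k.
Proof.
move=> t0; elim: k => [|k IH]; first by rewrite mul0r addr0 expr0.
rewrite exprS -natr1.
have h : 0 <= 1 + t by lra.
have : (1 + t) * (1 + k%:R * t) <= (1 + t) * (1 + t) ^+ k by rewrite ler_wpM2l.
have : 0 <= k%:R * t * t by rewrite mulr_ge0 // mulr_ge0.
nra.
Qed.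

Lemma small_pow (R : realType) (r d : R) : 0 <= r -> r < 1 -> 0 < d ->
  exists K : nat, forall k, (K <= k)%N -> r ^+ k <= d.
Proof.
move=> r0 r1 d0; have [->|rp] := eqVneq r 0.
  by exists 1%N => k k1; rewrite expr0n; case: k k1 => //= k _; exact: ltW.
have rp' : 0 < r by rewrite lt_def rp r0.
set t := r^-1 - 1.
have t0 : 0 < t by rewrite /t subr_gt0 invf_gt1.
set K := Num.bound ((t * d)^-1).
exists K => k kK.
have h1 : r ^+ k <= r ^+ K by apply: ler_wiXn2l => //; exact: ltW.
apply: (le_trans h1).
have hb : (t * d)^-1 < K%:R by apply: archi_boundP; rewrite invr_ge0 ltW // mulr_gt0.

have hB := bernoulli_ge K (ltW t0).
have e : 1 + t = r^-1 by rewrite /t; ring.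
rewrite e exprVn in hB.
have rK0 : 0 < r ^+ K by exact: exprn_gt0.
have : (t * d)^-1 < K%:R * t / t.
  by rewrite mulfK ?gt_eqF.
rewrite ltr_pdivlMr // => h2.
have h3 : (t * d)^-1 * t = d^-1 by rewrite invfM mulrAC mulVf ?gt_eqF // mul1r.
rewrite h3 in h2.
have h4 : d^-1 < (r ^+ K)^-1 by apply: (lt_le_trans h2); lra.
by move: h4; rewrite ltf_pV2 ?posrE // => /ltW.
Qed.

Section Core.
Variables (R : realType) (n : nat).

Lemma nrm2_opp (v : 'rV[R]_n) : nrm2 (- v) = nrm2 v.
Proof. by rewrite /nrm2 ipNl ipNr opprK. Qed.

Lemma core (x1 x2 y1 y2 : 'rV[R]_n) (al be B mu c : R) :
  0 <= B -> 0 <= al -> 0 < mu -> mu <= 1/8 -> mu * B <= 1/8 -> al <= mu / 2 ->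
  be <= B -> 0 <= c -> c * (B + 2) <= mu / 2 ->
  nrm2 x2 <= al * nrm2 x1 -> nrm2 y1 <= be * nrm2 y2 ->
  c * (nrm2 x1 + nrm2 x2 + nrm2 y1 + nrm2 y2) <= nrm2 (x1 - y1) + nrm2 (x2 - y2).
Proof.
move=> B0 al0 mu0 mu8 muB almu beB c0 cB h2 h1.
have l1 : 0 < 1 - mu by lra.
have t1 := nrm2_lam x1 y1 l1.
have hl : (0:R) < 2^-1 by rewrite invr_gt0 ltr0n.
have t2 := nrm2_lam y2 x2 hl; rewrite invrK in t2.
have -> : x2 - y2 = - (y2 - x2) by rewrite opprB.
rewrite nrm2_opp.
have k : (1 - mu)^-1 <= 1 + 2 * mu.
  rewrite -(ler_pM2l l1) mulfV ?gt_eqF //; nra.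
set z := (1 - mu)^-1 in t1 k.
have z0 : 0 <= z by rewrite /z invr_ge0 ltW.
set p := nrm2 x1 in h2 t1 *; set q := nrm2 y2 in h1 t2 *.
set s1 := nrm2 y1 in h1 t1 *; set s2 := nrm2 x2 in h2 t2 *.
have p0 : 0 <= p := nrm2_ge0 _.
have q0 : 0 <= q := nrm2_ge0 _.
have s10 : 0 <= s1 := nrm2_ge0 _.
have s20 : 0 <= s2 := nrm2_ge0 _.
have be0 : s1 <= B * q.
  by apply: (le_trans h1); rewrite ler_wpM2r.
have H1 : 0 <= (1 + 2 * mu - z) * s1 by rewrite mulr_ge0 // subr_ge0.
have H2 : mu * s1 <= mu * (B * q) by rewrite ler_wpM2l // ltW.
have H3 : al * p <= mu / 2 * p by rewrite ler_wpM2r.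
have H4 : c * s2 <= c * (mu / 2 * p) by rewrite ler_wpM2l //; apply: (le_trans h2).
have H5 : c * s1 <= c * (B * q) by rewrite ler_wpM2l.
have H6 : c * (B + 2) * p <= mu / 2 * p by rewrite ler_wpM2r.
have H7 : c * (B + 2) * q <= mu / 2 * q by rewrite ler_wpM2r.
have H8 : mu * B * q <= 1 / 8 * q by rewrite ler_wpM2r.
have H9 : c * (mu / 2 * p) <= c * p by rewrite ler_wpM2l //; nra.
have H10 : mu * q <= 1/8 * q by rewrite ler_wpM2r.
have H11 : mu * p <= 1/8 * p by rewrite ler_wpM2r.
nra.
Qed.

End Core.


Section Proj.
Variables (R : realType) (n : nat) (A B : 'M[R]_n).
Hypothesis hAB : (A :&: B = 0)%MS.
Hypothesis hfull : (1%:M <= A + B)%MS.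

Let hBA : (B :&: A = 0)%MS.
Proof. by rewrite capmxC. Qed.

Lemma pdec (v : 'rV[R]_n) : v *m proj_mx A B + v *m proj_mx B A = v.
Proof. exact: add_proj_mx hAB (submx_trans (submx1 v) hfull). Qed.

Lemma pA_id (v : 'rV[R]_n) : (v <= A)%MS -> v *m proj_mx A B = v.
Proof. exact: proj_mx_id. Qed.
Lemma pA_0 (v : 'rV[R]_n) : (v <= B)%MS -> v *m proj_mx A B = 0.
Proof. exact: proj_mx_0. Qed.
Lemma pB_id (v : 'rV[R]_n) : (v <= B)%MS -> v *m proj_mx B A = v.
Proof. exact: proj_mx_id. Qed.
Lemma pB_0 (v : 'rV[R]_n) : (v <= A)%MS -> v *m proj_mx B A = 0.
Proof. exact: proj_mx_0. Qed.

Variable S : 'M[R]_n.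
Hypothesis sA : forall v : 'rV[R]_n, (v <= A)%MS -> (v *m S <= A)%MS.
Hypothesis sB : forall v : 'rV[R]_n, (v <= B)%MS -> (v *m S <= B)%MS.

Lemma pA_comm (v : 'rV[R]_n) : v *m S *m proj_mx A B = v *m proj_mx A B *m S.
Proof.
have h1 := sA (proj_mx_sub A B v); have h2 := sB (proj_mx_sub B A v).
have e := pdec v.
set x := v *m proj_mx A B in h1 e *; set y := v *m proj_mx B A in h2 e *.
by rewrite -{1}e mulmxDl mulmxDl (pA_id h1) (pA_0 h2) addr0.
Qed.
Lemma pB_comm (v : 'rV[R]_n) : v *m S *m proj_mx B A = v *m proj_mx B A *m S.
Proof.
have h1 := sA (proj_mx_sub A B v); have h2 := sB (proj_mx_sub B A v).
have e := pdec v.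
set x := v *m proj_mx A B in h1 e *; set y := v *m proj_mx B A in h2 e *.
by rewrite -{1}e mulmxDl mulmxDl (pB_id h2) (pB_0 h1) add0r.
Qed.

Lemma pA_commX k (v : 'rV[R]_n) : v *m S ^+ k *m proj_mx A B = v *m proj_mx A B *m S ^+ k.
Proof.
elim: k v => [|k IH] v; first by rewrite expr0 !mulmx1.
by rewrite exprSr -mulmxE (mulmxA v) pA_comm IH (mulmxA (v *m proj_mx A B)).
Qed.
Lemma pB_commX k (v : 'rV[R]_n) : v *m S ^+ k *m proj_mx B A = v *m proj_mx B A *m S ^+ k.
Proof.
elim: k v => [|k IH] v; first by rewrite expr0 !mulmx1.
by rewrite exprSr -mulmxE (mulmxA v) pB_comm IH (mulmxA (v *m proj_mx B A)).
Qed.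

End Proj.

Lemma graph_bound (R : realType) (n : nat) (A B W : 'M[R]_n) :
  (A :&: B = 0)%MS -> (1%:M <= A + B)%MS ->
  (forall d : 'rV[R]_n, (d <= W)%MS -> (d <= B)%MS -> d = 0) ->
  exists2 a, 0 <= a & forall z : 'rV[R]_n, (z <= W)%MS ->
    nrm2 (z *m proj_mx B A) <= a * nrm2 (z *m proj_mx A B).
Proof.
move=> hAB hfull hW.
set L := pinvmx (W *m proj_mx A B) *m W.
have [a a0 ha] := bound_mul (L *m proj_mx B A) (ipm_one R n).
exists a => // z hz.
suff ez : z = z *m proj_mx A B *m L.
  by rewrite {1}ez -mulmxA; exact: ha.
set z' := z *m proj_mx A B *m L.
have hzW : (z *m proj_mx A B <= W *m proj_mx A B)%MS.
  by case/submxP: hz => x ->; rewrite -mulmxA submxMl.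
have ez' : z' *m proj_mx A B = z *m proj_mx A B.
  rewrite /z' /L -{2}(mulmxKpV hzW).
  by rewrite !mulmxA.
set d := z - z'.
have hdW : (d <= W)%MS by rewrite addmx_sub ?eqmx_opp // /z' /L mulmxA submxMl.
have hdA : d *m proj_mx A B = 0 by rewrite mulmxBl ez' subrr.
have hdB : (d <= B)%MS.
  by rewrite -(pdec hAB hfull d) hdA add0r proj_mx_sub.
by apply/eqP; rewrite -subr_eq0; apply/eqP; exact: hW.
Qed.


Section Helpers.
Variables (R : realType) (n : nat).

Lemma sum_sub_all (F : R -> 'M[R]_n) (s : seq R) (X : 'M[R]_n) :
  (forall a, a \in s -> (F a <= X)%MS) -> (\sum_(a <- s) F a <= X)%MS.
Proof.
elim: s => [|b s IH] h; first by rewrite big_nil sub0mx.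
rewrite big_cons addsmx_sub h ?mem_head //; apply: IH => a ha.
by apply: h; rewrite inE ha orbT.
Qed.

Lemma sum_sup (F : R -> 'M[R]_n) (s : seq R) a :
  a \in s -> (F a <= \sum_(b <- s) F b)%MS.
Proof.
elim: s => [|b s IH] //; rewrite inE big_cons => /orP [/eqP ->|h].
  exact: addsmxSl.
exact: submx_trans (IH h) (addsmxSr _ _).
Qed.

Lemma powK (T : 'M[R]_n) k : T \in unitmx -> T ^+ k *m invmx T ^+ k = 1%:M.
Proof.
move=> hT; elim: k => [|k IH]; first by rewrite !expr0 mulmx1.
rewrite exprS exprSr -!mulmxE -mulmxA (mulmxA (T ^+ k)) IH mul1mx.
exact: mulmxV.
Qed.

Lemma powK' (T : 'M[R]_n) k : T \in unitmx -> invmx T ^+ k *m T ^+ k = 1%:M.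
Proof.
move=> hT; elim: k => [|k IH]; first by rewrite !expr0 mulmx1.
rewrite exprS exprSr -!mulmxE -mulmxA (mulmxA (invmx T ^+ k)) IH mul1mx.
exact: mulVmx.
Qed.

Lemma stab_pow (S X : 'M[R]_n) : (forall v : 'rV[R]_n, (v <= X)%MS -> (v *m S <= X)%MS) ->
  forall k (v : 'rV[R]_n), (v <= X)%MS -> (v *m S ^+ k <= X)%MS.
Proof.
move=> h; elim=> [|k IH] v hv; first by rewrite expr0 mulmx1.
by rewrite exprSr -mulmxE mulmxA; apply: h; apply: IH.
Qed.

Lemma ip1_le (a b : 'rV[R]_n) : 2 * ip 1%:M a b <= nrm2 a + nrm2 b.
Proof.
have h := nrm2_ge0 (a - b).
rewrite /nrm2 !(ipDl, ipDr, ipNl, ipNr) in h *.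
rewrite (ip_sym b a (tr_scalar_mx _ _)) in h; lra.
Qed.

Lemma nrm2_sub_sym (a b : 'rV[R]_n) : nrm2 (a - b) = nrm2 (b - a).
Proof. by rewrite -opprB nrm2_opp. Qed.

End Helpers.

Lemma le_sub_swap (R : realType) (x y : R) : x <= 1 - y -> y <= 1 - x.
Proof. lra. Qed.

Lemma final_step (R : realType) (i g : R) : 0 < g -> g <= 1 -> -1 <= i -> i <= 1 - g ->
  acos (1 - g) <= acos i.
Proof.
move=> g0 g1 hi1 hig.
have im : i \in `[(-1), 1] by rewrite in_itv /=; apply/andP; split; lra.
have gm : 1 - g \in `[(-1), 1] by rewrite in_itv /=; apply/andP; split; lra.
rewrite leNgt; apply/negP => hlt.
have hx : acos (1 - g) \in `[0, pi].
  by rewrite in_itv /= acos_ge0 ?acos_lepi //; move: gm; rewrite in_itv.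
have hy : acos i \in `[0, pi].
  by rewrite in_itv /= acos_ge0 ?acos_lepi //; move: im; rewrite in_itv.
have := ltr_cos hy hx; rewrite hlt acosK // acosK // => h; have h' : 1 - g < i by rewrite h.
lra.
Qed.

Unset Implicit Arguments.
Theorem lemma8p2 (R : realType) (n : nat) (T : 'M[R]_n) (Wp Wm : 'M[R]_n)
  (hTinv : T \in unitmx)
  (hdiag : exists s : seq R, (\sum_(a <- s) eigenspace T a == (1%:M : 'M[R]_n))%MS)
  (heig : forall a : R, eigenvalue T a -> a != 1 /\ a != -1)
  (hdim : (\rank Wp + \rank Wm)%N = n)
  (hWp : forall v : 'rV[R]_n, (v <= Wp)%MS -> in_contracting T v -> v = 0)
  (hWm : forall v : 'rV[R]_n, (v <= Wm)%MS -> in_expanding T v -> v = 0) :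
  exists K : nat,
    (forall kp km : nat, (K <= kp + km)%N ->
       ((Wp *m T ^+ kp + Wm *m (invmx T) ^+ km) == (1%:M : 'M[R]_n))%MS /\
       ((Wp *m T ^+ kp :&: Wm *m (invmx T) ^+ km) == (0 : 'M[R]_n))%MS) /\
    (forall M : 'M[R]_n, inner_product_mx M ->
       exists2 eps : R, 0 < eps &
         forall kp km : nat, (K <= kp + km)%N ->
         forall u w : 'rV[R]_n,
           (u <= Wp *m T ^+ kp)%MS -> (w <= Wm *m (invmx T) ^+ km)%MS ->
           ip M u u = 1 -> ip M w w = 1 ->
           eps <= angle M u w).
Proof.
case: hdiag => s hs.
set sE := filter (fun a : R => 1 < `|a|) (undup s).
set sC := filter (fun a : R => `|a| < 1) (undup s).
set E := (\sum_(a <- sE) eigenspace T a)%MS.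
set C := (\sum_(a <- sC) eigenspace T a)%MS.
set iT := invmx T.
have hVT : forall b (v : 'rV[R]_n), (v <= eigenspace T b)%MS -> v *m T = b *: v.
  by move=> b v /eigenspaceP.
have hVi : forall b (v : 'rV[R]_n), (v <= eigenspace T b^-1)%MS -> v *m iT = b *: v.
  move=> b v /eigenspaceP hv.
  have ev : v = v *m T *m iT by rewrite -mulmxA mulmxV // mulmx1.
  have [b0|bn0] := eqVneq b 0.
    by rewrite b0 invr0 scale0r in hv; rewrite ev hv mul0mx b0 scale0r mul0mx.
  by rewrite {2}ev hv -scalemxAl scalerA mulfV // scale1r.
have sum_inv : forall l : seq R,
    (\sum_(b <- map GRing.inv l) eigenspace T b^-1)%MS = (\sum_(a <- l) eigenspace T a)%MS.
  by move=> l; rewrite big_map; apply: eq_bigr => a _; rewrite invrK.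
have stE : forall v : 'rV[R]_n, (v <= E)%MS -> (v *m T <= E)%MS.
  by move=> v; exact: sumV_S hVT sE v.
have stC : forall v : 'rV[R]_n, (v <= C)%MS -> (v *m T <= C)%MS.
  by move=> v; exact: sumV_S hVT sC v.
have stEi : forall v : 'rV[R]_n, (v <= E)%MS -> (v *m iT <= E)%MS.
  move=> v; rewrite /E -sum_inv; exact: sumV_S hVi _ v.
have stCi : forall v : 'rV[R]_n, (v <= C)%MS -> (v *m iT <= C)%MS.
  move=> v; rewrite /C -sum_inv; exact: sumV_S hVi _ v.
have hfull : (1%:M <= E + C)%MS.
  apply: submx_trans (proj2 (andP hs)) _.
  apply: sum_sub_all => a ha.
  have hau : a \in undup s by rewrite mem_undup.
  have [h|h|h] := ltrgtP `|a| 1.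
  - apply: submx_trans (addsmxSr _ _); apply: sum_sup.
    by rewrite mem_filter h hau.
  - apply: submx_trans (addsmxSl _ _); apply: sum_sup.
    by rewrite mem_filter h hau.
  - have : ~~ eigenvalue T a.
      apply/negP => /heig [h1 h2].
      have [a0|a0] := lerP 0 a.
        by move: h; rewrite ger0_norm // => e; rewrite e eqxx in h1.
      by move: h; rewrite ltr0_norm // => e; rewrite -e opprK eqxx in h2.
    by rewrite /eigenvalue negbK => /eqP ->; rewrite sub0mx.
have hr : forall b, b \in sC ++ map GRing.inv sE -> b ^+ 2 < 1.
  move=> b; rewrite mem_cat => /orP [|/mapP [a ha ->]].
    rewrite mem_filter => /andP [h _].
    by rewrite -(real_normK (num_real b)) exprn_ilt1.
  move: ha; rewrite mem_filter => /andP [h _].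
  have a0 : 0 < `|a| by exact: lt_trans ltr01 h.
  rewrite -(real_normK (num_real _)) exprn_ilt1 // normfV invf_lt1 //.
have [r [r0 r1 hrr]] := exists_r hr.
have hrC : forall b, b \in sC -> b ^+ 2 <= r.
  by move=> b hb; apply: hrr; rewrite mem_cat hb.
have hrE : forall b, b \in map GRing.inv sE -> b ^+ 2 <= r.
  by move=> b hb; apply: hrr; rewrite mem_cat hb orbT.
have uC : uniq sC by rewrite filter_uniq ?undup_uniq.
have uE : uniq (map GRing.inv sE).
  by rewrite map_inj_uniq ?filter_uniq ?undup_uniq //; exact: invr_inj.
have [cC cC0 decC] := decay hVT uC r0 hrC.
have [cE cE0 decE'] := decay hVi uE r0 hrE.
rewrite sum_inv -/E in decE'.
have hEC : (E :&: C = 0)%MS.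
  apply/eqP/rowV0P => v; rewrite sub_capmx => /andP [vE vC].
  set d := (2 * (cE * cC + 1))^-1.
  have d0 : 0 < d by rewrite invr_gt0; nra.
  have dd : d * (2 * (cE * cC + 1)) = 1 by rewrite mulVf //; apply: lt0r_neq0; nra.
  have [k hk] := small_pow r0 r1 d0.
  have hk' := hk k (leqnn k).
  have vkE : (v *m T ^+ k <= E)%MS := stab_pow stE k vE.
  have ev : v = v *m T ^+ k *m iT ^+ k by rewrite -mulmxA powK // mulmx1.
  have h1 := decE' _ vkE k; rewrite -ev in h1.
  have h2 := decC _ vC k.
  have rk0 : 0 <= r ^+ k := exprn_ge0 k r0.
  have rk1 : r ^+ k <= 1 := exprn_ile1 k r0 (ltW r1).
  set rho := r ^+ k in rk0 rk1 hk' h1 h2.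
  have N0 := nrm2_ge0 v; have X0 := nrm2_ge0 (v *m T ^+ k).
  set N := nrm2 v in N0 h1 h2 *; set X := nrm2 (v *m T ^+ k) in X0 h1 h2.
  have H1 : cE * rho * X <= cE * rho * (cC * rho * N) by rewrite ler_wpM2l // mulr_ge0.
  have H2 : rho * rho <= d by nra.
  have H4 : 0 <= (d - rho * rho) * (cE * cC * N) by rewrite mulr_ge0 ?subr_ge0 // !mulr_ge0.
  have H5 : cE * cC * d * N <= 1/2 * N.
    have e : cE * cC * d = 1/2 - d by nra.
    by rewrite e; nra.
  have : N <= 0 by nra.
  by move=> hN; apply: nrm2_eq0; apply/eqP; rewrite eq_le hN N0.
have hCE : (C :&: E = 0)%MS by rewrite capmxC.
have hfull' : (1%:M <= C + E)%MS by rewrite addsmxC.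
have hWp' : forall d : 'rV[R]_n, (d <= Wp)%MS -> (d <= C)%MS -> d = 0.
  move=> d h1 h2; apply: (hWp d h1); exists sC; split; [exact: filter_all | exact: h2].
have hWm' : forall d : 'rV[R]_n, (d <= Wm)%MS -> (d <= E)%MS -> d = 0.
  move=> d h1 h2; apply: (hWm d h1); exists sE; split; [exact: filter_all | exact: h2].
have [a a0 ga] := graph_bound hEC hfull hWp'.
have [b b0 gb] := graph_bound hCE hfull' hWm'.
set pE := proj_mx E C in ga gb *; set pC := proj_mx C E in ga gb *.
set A0 := cC * cE * (a + b).
have A00 : 0 <= A0 by rewrite /A0 !mulr_ge0 // addr_ge0.
have estU : forall kp (u : 'rV[R]_n), (u <= Wp *m T ^+ kp)%MS ->
    nrm2 (u *m pC) <= A0 * r ^+ kp * nrm2 (u *m pE).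
  move=> kp u /submxP [x ->]; rewrite !(mulmxA x Wp).
  set z := x *m Wp; have hz : (z <= Wp)%MS by exact: submxMl.
  have eC : z *m T ^+ kp *m pC = z *m pC *m T ^+ kp := pB_commX hEC hfull stE stC kp z.
  have eE : z *m T ^+ kp *m pE = z *m pE *m T ^+ kp := pA_commX hEC hfull stE stC kp z.
  have eE' : z *m pE = z *m T ^+ kp *m pE *m iT ^+ kp by rewrite eE -mulmxA powK // mulmx1.
  have h1 := decC (z *m pC) (proj_mx_sub C E z) kp.
  have h2 := ga z hz.
  have h3 := decE' (z *m T ^+ kp *m pE) (proj_mx_sub _ _ _) kp; rewrite -eE' in h3.
  rewrite eC.
  have rk0 : 0 <= r ^+ kp := exprn_ge0 kp r0.
  have rk1 : r ^+ kp <= 1 := exprn_ile1 kp r0 (ltW r1).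
  set rho := r ^+ kp in rk0 rk1 h1 h3 *.
  set X := nrm2 _ in h1 *; set Y := nrm2 (z *m pC) in h1 h2.
  set Z := nrm2 (z *m pE) in h2 h3; set U := nrm2 (z *m T ^+ kp *m pE) in h3 *.
  have U0 : 0 <= U := nrm2_ge0 _.
  have H1 : cC * rho * Y <= cC * rho * (a * Z) by rewrite ler_wpM2l // mulr_ge0.
  have H2 : cC * rho * a * Z <= cC * rho * a * (cE * rho * U) by rewrite ler_wpM2l // !mulr_ge0.
  have H3 : 0 <= cC * a * cE * rho * U * (1 - rho) by rewrite !mulr_ge0 // subr_ge0.
  have H4 : 0 <= cC * cE * b * rho * U by rewrite !mulr_ge0.
  rewrite /A0; nra.
have estW : forall km (w : 'rV[R]_n), (w <= Wm *m iT ^+ km)%MS ->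
    nrm2 (w *m pE) <= A0 * r ^+ km * nrm2 (w *m pC).
  move=> km w /submxP [x ->]; rewrite !(mulmxA x Wm).
  set z := x *m Wm; have hz : (z <= Wm)%MS by exact: submxMl.
  have eC : z *m iT ^+ km *m pC = z *m pC *m iT ^+ km := pB_commX hEC hfull stEi stCi km z.
  have eE : z *m iT ^+ km *m pE = z *m pE *m iT ^+ km := pA_commX hEC hfull stEi stCi km z.
  have eC' : z *m pC = z *m iT ^+ km *m pC *m T ^+ km by rewrite eC -mulmxA powK' // mulmx1.
  have h1 := decE' (z *m pE) (proj_mx_sub E C z) km.
  have h2 := gb z hz.
  have h3 := decC (z *m iT ^+ km *m pC) (proj_mx_sub _ _ _) km; rewrite -eC' in h3.
  rewrite eE.
  have rk0 : 0 <= r ^+ km := exprn_ge0 km r0.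
  have rk1 : r ^+ km <= 1 := exprn_ile1 km r0 (ltW r1).
  set rho := r ^+ km in rk0 rk1 h1 h3 *.
  set X := nrm2 _ in h1 *; set Y := nrm2 (z *m pE) in h1 h2.
  set Z := nrm2 (z *m pC) in h2 h3; set U := nrm2 (z *m iT ^+ km *m pC) in h3 *.
  have U0 : 0 <= U := nrm2_ge0 _.
  have H1 : cE * rho * Y <= cE * rho * (b * Z) by rewrite ler_wpM2l // mulr_ge0.
  have H2 : cE * rho * b * Z <= cE * rho * b * (cC * rho * U) by rewrite ler_wpM2l // !mulr_ge0.
  have H3 : 0 <= cC * b * cE * rho * U * (1 - rho) by rewrite !mulr_ge0 // subr_ge0.
  have H4 : 0 <= cC * cE * a * rho * U by rewrite !mulr_ge0.
  rewrite /A0; nra.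
set Q0 := fun v : 'rV[R]_n => nrm2 (v *m pE) + nrm2 (v *m pC).
have Q00 : forall v, 0 <= Q0 v by move=> v; rewrite /Q0 addr_ge0 ?nrm2_ge0.
set mu := (8 * (A0 + 1))^-1.
have mu0 : 0 < mu by rewrite invr_gt0; lra.
have emu : mu * (8 * (A0 + 1)) = 1 by rewrite mulVf //; apply: lt0r_neq0; lra.
have mu8 : mu <= 1/8 by nra.
have muB : mu * A0 <= 1/8 by nra.
set c := mu / 2 / (A0 + 2).
have ec : c * (A0 + 2) = mu / 2 by rewrite divfK //; apply: lt0r_neq0; lra.
have c0 : 0 < c by rewrite /c !divr_gt0 //; lra.
set dd := mu / 2 / (A0 + 1).
have edd : dd * (A0 + 1) = mu / 2 by rewrite divfK //; apply: lt0r_neq0; lra.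
have dd0 : 0 < dd by rewrite /dd !divr_gt0 //; lra.
have A0dd : A0 * dd <= mu / 2 by nra.
have [K0 hK0] := small_pow r0 r1 dd0.
have key : forall kp km, (K0 + K0 <= kp + km)%N -> forall u w : 'rV[R]_n,
    (u <= Wp *m T ^+ kp)%MS -> (w <= Wm *m iT ^+ km)%MS ->
    c * (Q0 u + Q0 w) <= Q0 (u - w).
  move=> kp km hk u w hu hw.
  have h1 := estU kp u hu; have h2 := estW km w hw.
  rewrite /Q0 !mulmxBl.
  have rp1 : r ^+ kp <= 1 := exprn_ile1 kp r0 (ltW r1).
  have rm1 : r ^+ km <= 1 := exprn_ile1 km r0 (ltW r1).
  have rp0 : 0 <= r ^+ kp := exprn_ge0 kp r0.
  have rm0 : 0 <= r ^+ km := exprn_ge0 km r0.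
  case: (leqP K0 kp) => hkp.
    have al1 : A0 * r ^+ kp <= mu / 2.
      by apply: le_trans A0dd; rewrite ler_wpM2l // hK0.
    have be1 : A0 * r ^+ km <= A0 by rewrite -{2}(mulr1 A0) ler_wpM2l.
    have cB : c * (A0 + 2) <= mu / 2 by rewrite ec.
    have := core A00 (mulr_ge0 A00 rp0) mu0 mu8 muB al1 be1 (ltW c0) cB h1 h2.
    lra.
  have hkm : (K0 <= km)%N.
    by rewrite -(leq_add2l K0); apply: (leq_trans hk); rewrite leq_add2r ltnW.
  have al1 : A0 * r ^+ km <= mu / 2.
    by apply: le_trans A0dd; rewrite ler_wpM2l // hK0.
  have be1 : A0 * r ^+ kp <= A0 by rewrite -{2}(mulr1 A0) ler_wpM2l.
  have cB : c * (A0 + 2) <= mu / 2 by rewrite ec.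
  have := core A00 (mulr_ge0 A00 rm0) mu0 mu8 muB al1 be1 (ltW c0) cB h2 h1.
  rewrite (nrm2_sub_sym (w *m pC)) (nrm2_sub_sym (w *m pE)); lra.
exists (K0 + K0)%N; split.
  move=> kp km hk.
  set U := Wp *m T ^+ kp; set V := Wm *m iT ^+ km.
  have hcap : forall v : 'rV[R]_n, (v <= U :&: V)%MS -> v = 0.
    move=> v; rewrite sub_capmx => /andP [hu hw].
    have := key kp km hk v v hu hw.
    rewrite subrr /Q0 !mul0mx nrm2_0 addr0 => hq.
    have hE0 := nrm2_ge0 (v *m pE); have hC0 := nrm2_ge0 (v *m pC).
    have hq' : nrm2 (v *m pE) + nrm2 (v *m pC) <= 0 by nra.
    have e1 : v *m pE = 0 by apply: nrm2_eq0; lra.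
    have e2 : v *m pC = 0 by apply: nrm2_eq0; lra.
    by rewrite -(pdec hEC hfull v) -/pE -/pC e1 e2 addr0.
  have cap0 : (U :&: V == (0 : 'M[R]_n))%MS.
    apply/andP; split; last exact: sub0mx.
    by rewrite submx0; apply/rowV0P.
  split => //.
  have rU : \rank U = \rank Wp.
    by rewrite /U mxrankMfree // row_free_unit; exact: (mulmx1_unit (powK kp hTinv)).1.
  have rV : \rank V = \rank Wm.
    by rewrite /V mxrankMfree // row_free_unit; exact: (mulmx1_unit (powK km hTinv)).2.
  have rc : \rank (U :&: V) = 0%N by rewrite (eqmx_rank cap0) mxrank0.
  have hs' := mxrank_sum_cap U V.
  rewrite -(mxrank_leqif_eq (submx1 _)).2 mxrank1; apply/eqP.
  clear -hs' rc rU rV hdim; lia.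
move=> M hM.
have [cPE cPE0 hPE] := bound_mul pE hM.
have [cPC cPC0 hPC] := bound_mul pC hM.
have [cM cM0 hMM] := bound_mul M (ipm_one R n).
set C1 := cPE + cPC + 1.
have Q0le : forall v, Q0 v <= C1 * ip M v v.
  move=> v; have := hPE v; have := hPC v; have := ipQ_ge0 v hM; rewrite /Q0 /C1; lra.
have Qle : forall v, ip M v v <= (cM + 1) * Q0 v.
  move=> v.
  have e : ip M v v = ip 1%:M (v *m M) v by rewrite /ip mulmx1.
  have h1 := ip1_le (v *m M) v.
  have h2 := hMM v.
  have h3 : nrm2 v <= 2 * Q0 v.
    by rewrite -{1}(pdec hEC hfull v) /Q0; have := nrm2_add (v *m pE) (v *m pC); lra.
  have N0 := nrm2_ge0 v.
  have : cM * nrm2 v <= cM * (2 * Q0 v) by rewrite ler_wpM2l.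
  rewrite /nrm2 in h1 h2 h3 N0 *; rewrite e; lra.
set D0 := C1 * (cM + 1).
have D00 : 0 < D0 by rewrite /D0 /C1 mulr_gt0 //; lra.
set g := Num.min (c / D0) 1.
have g0 : 0 < g by rewrite /g lt_min ltr01 andbT divr_gt0.
have g1 : g <= 1 by rewrite /g ge_min lexx orbT.
have gc : g <= c / D0 by rewrite /g ge_min lexx.
exists (acos (1 - g)).
  by apply: acos_gt0; apply/andP; split; lra.
move=> kp km hk u w hu hw uu ww.
have hkey := key kp km hk u w hu hw.
have h1 := Q0le (u - w).
have hu1 := Qle u; have hw1 := Qle w.
rewrite uu in hu1; rewrite ww in hw1.
have eQ : ip M (u - w) (u - w) = 2 - 2 * ip M u w.
  rewrite !(ipDl, ipDr, ipNl, ipNr) (ip_sym w u (proj1 hM)) uu ww; ring.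
rewrite eQ in h1.
have hcs := ip_cs u w hM; rewrite uu ww mulr1 in hcs.
set i := ip M u w in hcs h1 eQ *.
have hi1 : -1 <= i by nra.
have hQu := Q00 u; have hQw := Q00 w; have hQuw := Q00 (u - w).
have hD : c <= (1 - i) * D0.
  have : c * (Q0 u + Q0 w) <= C1 * (2 - 2 * i) by lra.
  move=> h.
  have : c * ((cM + 1) * Q0 u + (cM + 1) * Q0 w) <= (cM + 1) * (C1 * (2 - 2 * i)).
    have -> : c * ((cM + 1) * Q0 u + (cM + 1) * Q0 w) = (cM + 1) * (c * (Q0 u + Q0 w)) by ring.
    by rewrite ler_wpM2l //; lra.
  move=> h'.
  have : c * 2 <= c * ((cM + 1) * Q0 u + (cM + 1) * Q0 w) by rewrite ler_wpM2l //; [exact: ltW|lra].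
  rewrite /D0; nra.
have hig : i <= 1 - g.
  have h : c / D0 <= 1 - i by rewrite ler_pdivrMr.
  exact: le_sub_swap (le_trans gc h).
rewrite /angle -/i; exact: final_step g0 g1 hi1 hig.
Qed.
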